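(* Let $n \geq 1$ be an integer. Let $\mathcal{G} = (\mathcal{V}, \mathcal{E})$ be a cycle graph with $|\mathcal{V}| = 2n$ nodes, and let $\mathcal{G}' = (\mathcal{V}', \mathcal{E}')$ be a path graph with $|\mathcal{V}'| = 2n+1$ nodes. Let $P_k$ and $P'_k$ denote the $k$-hop random walk matrices of $\mathcal{G}$ and $\mathcal{G}'$ respectively. Then for every pair of nodes $(i,j) \in \mathcal{V} \times \mathcal{V}$ there exists a pair of nodes $(i',j') \in \mathcal{V}' \times \mathcal{V}'$ such that $(P_k)_{ij} = (P'_k)_{i'j'}$ for all integers $k \geq 1$.
   Context: Graphs are finite and undirected. For a graph with adjacency matrix $A$ (with $A_{ij}=1$ if $i,j$ are adjacent and $0$ otherwise) and diagonal degree matrix $D$ (with $D_{ii} = \sum_j A_{ij}$), the $k$-hop random walk matrix is $P_k = (D^{-1}A)^k$; its $(i,j)$ entry is the probability that a simple random walk of length $k$ started at $i$ ends at $j$. A cycle graph is a graph consisting of a single cycle (all nodes distinct except that the walk returns to its start); a path graph is a graph consisting of a single simple path through all its nodes. *)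

(* Defs.v *)
From HB Require Import structures.
From mathcomp Require Import all_boot all_order all_algebra all_fingroup.
Set Implicit Arguments. Unset Strict Implicit. Unset Printing Implicit Defensive.
Import Order.TTheory GRing.Theory Num.Theory.
Local Open Scope ring_scope.

Definition adj_mx (R : pzRingType) (m : nat) (G : rel 'I_m) : 'M[R]_m :=
  \matrix_(i, j) (G i j)%:R.

Definition deg_mx (R : pzRingType) (m : nat) (G : rel 'I_m) : 'M[R]_m :=
  diag_mx (\row_i (\sum_j adj_mx R G i j)).

Definition rw_mx (R : fieldType) (m : nat) (G : rel 'I_m) (k : nat) : 'M[R]_m :=
  (invmx (deg_mx R G) *m adj_mx R G) ^+ k.

Definition std_cycle (m : nat) : rel 'I_m :=
  fun i j => (j == (i.+1 %% m)%N :> nat) || (i == (j.+1 %% m)%N :> nat).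

Definition std_path (m : nat) : rel 'I_m :=
  fun i j => (j == i.+1 :> nat) || (i == j.+1 :> nat).

Definition is_cycle_graph (m : nat) (G : rel 'I_m) : Prop :=
  exists s : {perm 'I_m}, forall i j, G (s i) (s j) = std_cycle i j.

Definition is_path_graph (m : nat) (G : rel 'I_m) : Prop :=
  exists s : {perm 'I_m}, forall i j, G (s i) (s j) = std_path i j.

(* Main.v *)
Require Import Defs.
From mathcomp Require Import all_boot all_order all_algebra all_fingroup.
From mathcomp Require Import zify ring lra.
Set Implicit Arguments. Unset Strict Implicit. Unset Printing Implicit Defensive.
Import Order.TTheory GRing.Theory Num.Theory.

Section NatPart.
Local Open Scope nat_scope.
Definition lo (d : nat) := if d == 0 then 1 else d.-1.
Definition hi (n d : nat) := if d == n then n.-1 else d.+1.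
Definition sv n (i : nat) := if i.+1 == 2 * n then 0 else i.+1.
Definition pv n (i : nat) := if i == 0 then (2 * n).-1 else i.-1.
Definition rr n (i j : nat) := if i <= j then j - i else j + 2 * n - i.
Definition fd n (r : nat) := if r <= n then r else 2 * n - r.
Definition cdist n i j := fd n (rr n i j).
Definition pdist n x := x - n + (n - x).
Lemma fd_spec n x : ((x <= n)%N /\ fd n x = x) \/ ((n < x)%N /\ fd n x = (2 * n - x)%N).
Proof. rewrite /fd; case: leqP; auto. Qed.
Lemma lo_spec d : (d = 0%N /\ lo d = 1%N) \/ ((0 < d)%N /\ lo d = d.-1).
Proof. rewrite /lo; case: eqP => ?; [left|right]; lia. Qed.
Lemma hi_spec n d : (d = n /\ hi n d = n.-1) \/ (d <> n /\ hi n d = d.+1).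
Proof. rewrite /hi; case: eqP => ?; auto. Qed.
Lemma rr_spec n i j : (i <= j /\ rr n i j = j - i) \/ (j < i /\ rr n i j = j + 2 * n - i).
Proof. rewrite /rr; case: leqP; auto. Qed.
Lemma cdist0 n i j : i < 2 * n -> j < 2 * n -> (cdist n i j == 0) = (i == j).
Proof.
move=> *; rewrite /cdist; case: (rr_spec n i j) => [[? e]|[? e]]; rewrite e;
case: (fd_spec n (j - i)) => [[? e1]|[? e1]]; rewrite ?e1;
case: (fd_spec n (j + 2 * n - i)) => [[? e2]|[? e2]]; rewrite ?e2; apply/eqP/eqP; lia.
Qed.
Lemma cdist_le n i j : i < 2 * n -> j < 2 * n -> cdist n i j <= n.
Proof.
move=> *; rewrite /cdist; case: (rr_spec n i j) => [[? e]|[? e]]; rewrite e;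
case: (fd_spec n (j - i)) => [[? e1]|[? e1]]; rewrite ?e1;
case: (fd_spec n (j + 2 * n - i)) => [[? e2]|[? e2]]; rewrite ?e2; lia.
Qed.
Lemma sv_lt n i : i < 2 * n -> sv n i < 2 * n.
Proof. by rewrite /sv; case: ifP => ?; lia. Qed.
Lemma pv_lt n i : 0 < n -> i < 2 * n -> pv n i < 2 * n.
Proof. by rewrite /pv; case: ifP => ?; lia. Qed.
Lemma sv_pv n i : 1 < n -> i < 2 * n -> sv n i != pv n i.
Proof. by rewrite /sv /pv; case: ifP => ?; case: ifP => ?; lia. Qed.
Lemma sv_pv1 i : i < 2 * 1 -> sv 1 i = pv 1 i.
Proof. by case: i => [|[|]]. Qed.
Lemma modS n i : i < 2 * n -> i.+1 %% (2 * n) = sv n i.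
Proof. move=> ?; rewrite /sv; case: eqP => h; first by rewrite h modnn. rewrite modn_small //; lia. Qed.
Lemma cyc_b n i l : i < 2 * n -> l < 2 * n -> (i == sv n l) = (l == pv n i).
Proof. move=> *; apply/eqP/eqP; rewrite /sv /pv; case: ifP => ?; case: ifP => ?; lia. Qed.
Lemma pd0 n x : (pdist n x == 0) = (x == n).
Proof. by apply/eqP/eqP; rewrite /pdist; lia. Qed.
Lemma pd_le n x : x < (2 * n).+1 -> pdist n x <= n.
Proof. rewrite /pdist; lia. Qed.
Lemma pd_nb n x : 0 < x -> x < 2 * n ->
  (pdist n x.-1 = lo (pdist n x) /\ pdist n x.+1 = hi n (pdist n x)) \/
  (pdist n x.-1 = hi n (pdist n x) /\ pdist n x.+1 = lo (pdist n x)).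
Proof.
move=> *; case: (lo_spec (pdist n x)) => [[? ->]|[? ->]];
case: (hi_spec n (pdist n x)) => [[? ->]|[? ->]]; unfold pdist in *; lia.
Qed.
Lemma pd_end0 n : 0 < n -> pdist n 1 = lo (pdist n 0) /\ pdist n 1 = hi n (pdist n 0).
Proof. move=> *; rewrite /pdist /lo /hi; case: ifP => ?; case: ifP => ?; lia. Qed.
Lemma pd_end2 n : 0 < n -> pdist n (2 * n).-1 = lo (pdist n (2 * n)) /\ pdist n (2 * n).-1 = hi n (pdist n (2 * n)).
Proof. move=> *; rewrite /pdist /lo /hi; case: ifP => ?; case: ifP => ?; lia. Qed.
Lemma pb0 l : (l == 1) || (0 == l.+1) = (l == 1).
Proof. by rewrite orbF. Qed.
Lemma pb2 n l : 0 < n -> l < (2 * n).+1 -> (l == (2 * n).+1) || (2 * n == l.+1) = (l == (2 * n).-1).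
Proof. move=> *; case: eqP => ?; case: eqP => ?; case: eqP => ? //=; exfalso; lia. Qed.
Lemma pbM x l : 0 < x -> (l == x.+1) || (x == l.+1) = (l == x.+1) || (l == x.-1).
Proof. move=> *; case: eqP => ?; case: eqP => ?; case: eqP => ? //=; exfalso; lia. Qed.
Lemma rr_sv n i j : (i < 2 * n)%N -> (j < 2 * n)%N ->
  rr n (sv n i) j = if rr n i j == 0 then (2 * n).-1 else (rr n i j).-1.
Proof. move=> *; rewrite /sv; case: ifP => ?; rewrite /rr; case: (leqP i j) => ?.
- rewrite leq0n; case: ifP => ?; lia.
- rewrite leq0n; case: ifP => ?; lia.
- case: (leqP i.+1 j) => ?; case: ifP => ?; lia.
- case: (leqP i.+1 j) => ?; case: ifP => ?; lia.
Qed.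
Lemma rr_pv n i j : (i < 2 * n)%N -> (j < 2 * n)%N ->
  rr n (pv n i) j = if rr n i j == (2 * n).-1 then 0 else (rr n i j).+1.
Proof. move=> *; rewrite /pv; case: ifP => ?; rewrite /rr; case: (leqP i j) => ?.
- case: (leqP (2 * n).-1 j) => ?; case: ifP => ?; lia.
- case: (leqP (2 * n).-1 j) => ?; case: ifP => ?; lia.
- case: (leqP i.-1 j) => ?; case: ifP => ?; lia.
- case: (leqP i.-1 j) => ?; case: ifP => ?; lia.
Qed.
Lemma rr_lt n i j : (i < 2 * n)%N -> (j < 2 * n)%N -> (rr n i j < 2 * n)%N.
Proof. move=> *; rewrite /rr; case: ifP => ?; lia. Qed.
Lemma fd_nb n r : (1 < n)%N -> (r < 2 * n)%N ->
  (fd n (if r == 0 then (2 * n).-1 else r.-1) = lo (fd n r) /\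
   fd n (if r == (2 * n).-1 then 0 else r.+1) = hi n (fd n r)) \/
  (fd n (if r == 0 then (2 * n).-1 else r.-1) = hi n (fd n r) /\
   fd n (if r == (2 * n).-1 then 0 else r.+1) = lo (fd n r)).
Proof.
move=> *.
set a := (if r == 0 then _ else _).
set b := (if r == (2 * n).-1 then _ else _).
have ha : (r = 0%N /\ a = (2 * n).-1) \/ (r <> 0%N /\ a = r.-1).
  by rewrite /a; case: eqP; auto.
have hb : (r = (2 * n).-1 /\ b = 0%N) \/ (r <> (2 * n).-1 /\ b = r.+1).
  by rewrite /b; case: eqP; auto.
case: (lo_spec (fd n r)) => [[? ->]|[? ->]];
case: (hi_spec n (fd n r)) => [[? ->]|[? ->]];
case: ha => [[? ->]|[? ->]]; case: hb => [[? ->]|[? ->]]; try (exfalso; lia);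
case: (fd_spec n r) => [[? ?]|[? ?]]; try (exfalso; lia);
case: (fd_spec n (2 * n).-1) => [[? e0]|[? e0]]; rewrite ?e0; try (exfalso; lia);
case: (fd_spec n r.-1) => [[? e1]|[? e1]]; rewrite ?e1; try (exfalso; lia);
case: (fd_spec n 0) => [[? e2]|[? e2]]; rewrite ?e2; try (exfalso; lia);
case: (fd_spec n r.+1) => [[? e3]|[? e3]]; rewrite ?e3; lia.
Qed.
Lemma fd_nb1 r : (r < 2)%N ->
  fd 1 (if r == 0 then (2 * 1).-1 else r.-1) = lo (fd 1 r) /\
  fd 1 (if r == 0 then (2 * 1).-1 else r.-1) = hi 1 (fd 1 r).
Proof. by case: r => [|[|]]. Qed.
End NatPart.

Local Open Scope ring_scope.

Section Gen.
Variable R : fieldType.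

Definition dg m (G : rel 'I_m) (i : 'I_m) : R := \sum_j (G i j)%:R.
Definition tmx m (G : rel 'I_m) : 'M[R]_m := \matrix_(i, j) ((G i j)%:R / dg G i).

Lemma rw_tmx m (G : rel 'I_m) k : (forall i, dg G i != 0) -> rw_mx R G k = tmx G ^+ k.
Proof.
move=> hd; rewrite /rw_mx; congr (_ ^+ _).
have hA : adj_mx R G = deg_mx R G *m tmx G.
  apply/matrixP => i j; rewrite mul_diag_mx !mxE.
  have -> : \sum_j0 adj_mx R G i j0 = dg G i by apply: eq_bigr => l _; rewrite mxE.
  by rewrite mulrC divfK.
have hU : deg_mx R G \in unitmx.
  rewrite unitmxE det_diag unitfE; apply/prodf_neq0 => i _; rewrite mxE.
  have -> : \sum_j0 adj_mx R G i j0 = dg G i by apply: eq_bigr => l _; rewrite mxE.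
  exact: hd.
by rewrite hA mulKmx.
Qed.

Lemma tmxS m (G : rel 'I_m) k i j :
  (tmx G ^+ k.+1) i j = (\sum_l (G i l)%:R * (tmx G ^+ k) l j) / dg G i.
Proof.
rewrite exprS -mulmxE mxE mulr_suml; apply: eq_bigr => l _.
by rewrite mxE mulrAC.
Qed.

Lemma tmx_perm m (G H : rel 'I_m) (s : {perm 'I_m}) :
  (forall i j, G (s i) (s j) = H i j) ->
  forall k i j, (tmx G ^+ k) (s i) (s j) = (tmx H ^+ k) i j.
Proof.
move=> hs k; elim: k => [|k IH] i j.
  by rewrite !expr0 !mxE (inj_eq perm_inj).
have hdg : dg G (s i) = dg H i.
  by rewrite /dg (reindex_inj (@perm_inj _ s)); apply: eq_bigr => l _; rewrite hs.
rewrite !tmxS hdg (reindex_inj (@perm_inj _ s)); congr (_ / _).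
by apply: eq_bigr => l _; rewrite hs IH.
Qed.

Lemma sum_nat1 m (a : nat) (ha : (a < m)%N) (phi : nat -> R) :
  \sum_(j < m) ((val j == a))%:R * phi j = phi a.
Proof.
rewrite (bigD1 (Ordinal ha)) //= eqxx mul1r big1 ?addr0 // => j hj.
have -> : (val j == a) = false.
  by apply/negbTE; apply: contra hj => /eqP h; apply/eqP/val_inj.
by rewrite mul0r.
Qed.

Lemma sum_nat2 m (a b : nat) (ha : (a < m)%N) (hb : (b < m)%N) (hab : a != b) (phi : nat -> R) :
  \sum_(j < m) ((val j == a) || (val j == b))%:R * phi j = phi a + phi b.
Proof.
rewrite -(sum_nat1 ha phi) -(sum_nat1 hb phi) -big_split /=.
apply: eq_bigr => j _.
case: (eqVneq (val j) a) => [->|]; last by rewrite /= mul0r add0r.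
by rewrite (negbTE hab) /= mul0r addr0.
Qed.

End Gen.

Section Main.
Variable R : realFieldType.

Fixpoint hh (n k d : nat) : R :=
  if k is k'.+1 then (hh n k' (lo d) + hh n k' (hi n d)) / 2 else (d == 0)%:R.

Lemma cyc_sum n (hn : (0 < n)%N) (phi : nat -> R) (i : 'I_(2 * n)) :
  \sum_l ((std_cycle i l)%:R * phi l) =
  if n == 1%N then phi (sv n i) else phi (sv n i) + phi (pv n i).
Proof.
have hi := ltn_ord i.
have -> : \sum_l ((std_cycle i l)%:R * phi l) =
   \sum_(l < (2 * n)%N) (((val l == sv n i) || (val l == pv n i))%:R * phi l).
  apply: eq_bigr => l _; congr (_%:R * _).
  by rewrite /std_cycle !modS ?ltn_ord // (cyc_b (ltn_ord i) (ltn_ord l)).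
case: (eqVneq n 1%N) => [en|ne].
  subst n; rewrite sv_pv1 //; under eq_bigr => l _ do rewrite orbb; exact: (sum_nat1 (pv_lt (isT : (0 < 1)%N) (ltn_ord i))).
rewrite sum_nat2 //; [exact: sv_lt | exact: pv_lt | apply: sv_pv => //; lia].
Qed.


Lemma path_sum n (hn : (0 < n)%N) (phi : nat -> R) (x : 'I_(2 * n).+1) :
  \sum_l ((std_path x l)%:R * phi l) =
  if nat_of_ord x == 0%N then phi 1%N else if nat_of_ord x == (2 * n)%N then phi (2 * n).-1
  else phi x.+1 + phi x.-1.
Proof.
have hx := ltn_ord x.
case: (eqVneq (nat_of_ord x) 0%N) => [x0|xn0].
  under eq_bigr => l _ do rewrite /std_path x0 pb0.
  apply: sum_nat1. move: hn; clear; lia.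
case: (eqVneq (nat_of_ord x) (2 * n)%N) => [x2|xn2].
  under eq_bigr => l _ do rewrite /std_path x2 (pb2 hn (ltn_ord l)).
  apply: sum_nat1; move: hn; clear; lia.
have xp : (0 < x)%N by move: xn0; clear; lia.
under eq_bigr => l _ do rewrite /std_path (pbM _ xp).
apply: sum_nat2; move: hx xn0 xn2; clear; lia.
Qed.

Lemma cyc_main n (hn : (0 < n)%N) k (i j : 'I_(2 * n)) :
  (tmx R (@std_cycle (2 * n)%N) ^+ k) i j = hh n k (cdist n i j).
Proof.
elim: k i => [|k IH] i.
  by rewrite expr0 mxE /= cdist0 ?ltn_ord.
rewrite tmxS.
under eq_bigr => l _ do rewrite IH.
rewrite (cyc_sum hn (fun x => hh n k (cdist n x j))).
have -> : dg R (@std_cycle (2 * n)%N) i = if n == 1%N then 1 else 1 + 1.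
  rewrite /dg -(cyc_sum hn (fun _ => 1) i); apply: eq_bigr => l _; by rewrite mulr1.
have hi := ltn_ord i; have hj := ltn_ord j.
case: (eqVneq n 1%N) => [en|ne].
  subst n; rewrite /= /cdist rr_sv //.
  have [e1 e2] := fd_nb1 (rr_lt hi hj).
  rewrite -e1 -e2; lra.
rewrite /= /cdist rr_sv // rr_pv //.
have two : (1 + 1 : R) = 2%:R by rewrite mulr2n.
have : (1 < n)%N by lia.
move/fd_nb => /(_ _ (rr_lt hi hj)) [[-> ->]|[-> ->]] /=; rewrite two //.
by rewrite addrC.
Qed.

Lemma path_main n (hn : (0 < n)%N) (n0 : 'I_(2 * n).+1) (hn0 : val n0 = n) k (x : 'I_(2 * n).+1) :
  (tmx R (@std_path (2 * n).+1) ^+ k) x n0 = hh n k (pdist n x).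
Proof.
elim: k x => [|k IH] x.
  rewrite expr0 mxE /= pd0.
  have -> : (x == n0) = (nat_of_ord x == n) by rewrite -val_eqE /= hn0.
  by [].
rewrite tmxS.
under eq_bigr => l _ do rewrite IH.
rewrite (path_sum hn (fun y => hh n k (pdist n y))).
have -> : dg R (@std_path (2 * n).+1) x =
   if nat_of_ord x == 0%N then 1 else if nat_of_ord x == (2 * n)%N then 1 else 1 + 1.
  rewrite /dg -(path_sum hn (fun _ => 1) x); apply: eq_bigr => l _; by rewrite mulr1.
have hx := ltn_ord x.
case: (eqVneq (nat_of_ord x) 0%N) => [x0|xn0].
  rewrite /= x0; have [e1 e2] := pd_end0 hn. rewrite -e1 -e2. lra.
case: (eqVneq (nat_of_ord x) (2 * n)%N) => [x2|xn2].
  rewrite /= x2; have [e1 e2] := pd_end2 hn. rewrite -e1 -e2. lra.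
have : (0 < x)%N by lia.
have : (x < 2 * n)%N by lia.
have two : (1 + 1 : R) = 2%:R by rewrite mulr2n.
rewrite two.
move=> h1 h2; case: (pd_nb h2 h1) => [[-> ->]|[-> ->]] //=.
by rewrite addrC.
Qed.


Lemma dg_cyc_nz n (hn : (0 < n)%N) (i : 'I_(2 * n)) : dg R (@std_cycle (2 * n)%N) i != 0.
Proof.
have -> : dg R (@std_cycle (2 * n)%N) i = if n == 1%N then 1 else 1 + 1.
  rewrite /dg -(cyc_sum hn (fun _ => 1) i); apply: eq_bigr => l _; by rewrite mulr1.
by case: ifP => _; rewrite ?oner_eq0 // -mulr2n pnatr_eq0.
Qed.

Lemma dg_path_nz n (hn : (0 < n)%N) (x : 'I_(2 * n).+1) : dg R (@std_path (2 * n).+1) x != 0.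
Proof.
have -> : dg R (@std_path (2 * n).+1) x =
   if nat_of_ord x == 0%N then 1 else if nat_of_ord x == (2 * n)%N then 1 else 1 + 1.
  rewrite /dg -(path_sum hn (fun _ => 1) x); apply: eq_bigr => l _; by rewrite mulr1.
by case: ifP => _; [|case: ifP => _]; rewrite ?oner_eq0 // -mulr2n pnatr_eq0.
Qed.

Lemma dg_perm m (G H : rel 'I_m) (s : {perm 'I_m}) :
  (forall i j, G (s i) (s j) = H i j) -> forall i, dg R G (s i) = dg R H i.
Proof.
move=> hs i.
by rewrite /dg (reindex_inj (@perm_inj _ s)); apply: eq_bigr => l _; rewrite hs.
Qed.

End Main.

Theorem proposition1 (R : realFieldType) (n : nat) (hn : (1 <= n)%N)
    (G : rel 'I_(2 * n)) (G' : rel 'I_(2 * n).+1)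
    (hG : is_cycle_graph G) (hG' : is_path_graph G') :
  forall i j : 'I_(2 * n), exists i' j' : 'I_(2 * n).+1,
    forall k : nat, (1 <= k)%N -> rw_mx R G k i j = rw_mx R G' k i' j'.
Proof.
move=> i j.
case: hG => s hs; case: hG' => s' hs'.
have hd : (n + cdist n (s^-1 i)%g (s^-1 j)%g < (2 * n).+1)%N.
  have := cdist_le (ltn_ord (s^-1 i)%g) (ltn_ord (s^-1 j)%g); lia.
have hn' : (n < (2 * n).+1)%N by lia.
exists (s' (Ordinal hd)), (s' (Ordinal hn')).
move=> k _.
rewrite !rw_tmx; first last.
- by move=> x; rewrite -(permKV s x) (dg_perm R hs) (dg_cyc_nz R hn).
- by move=> x; rewrite -(permKV s' x) (dg_perm R hs') (dg_path_nz R hn).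
rewrite -{1}(permKV s i) -{1}(permKV s j) (tmx_perm R hs) (tmx_perm R hs').
rewrite (cyc_main R hn) (path_main R hn) //.
congr hh; rewrite /pdist /=; lia.
Qed.
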